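(* Let $K$ and $L$ be $n$-element finite sets, $M=K\times L$, and let $u=(u_{kl})$ be a unitary matrix indexed by $K\times L$ all of whose entries are nonzero. Let $G$ be a symmetry group of $u$ with associated representations $S$ on $F(K)$ and $R$ on $F(M)$ (as defined in the context). Then for every $g\in G$ and $f\in F(M)$, $$C_u(R_gf)=S_g\,(C_uf)\,S_g^*\quad\text{and}\quad D_u(R_gf)=S_g\,(D_uf)\,S_g^*.$$
   Context: For a finite set $J$, $F(J)$ denotes the space of complex-valued functions on $J$, with standard Hermitian product $\sum_j\varphi_j\bar\psi_j$. For $f=(f_{kl})\in F(M)$, $C_uf$ and $D_uf$ are the operators on $F(K)$ with matrices $x_{kk'}=\sum_{l\in L}u_{kl}f_{kl}\bar u_{k'l}$ and $y_{kk'}=\sum_{l\in L}u_{kl}f_{k'l}\bar u_{k'l}$ respectively. Let $\mathcal U:F(L)\to F(K)$ be $(\mathcal U\psi)_k=\sum_{l}u_{kl}\psi_l$. A group $G$ is called a symmetry group of $u$ if $G$ acts on the left on the sets $K$ and $L$, and there are faithful unitary representations $S$ on $F(K)$ and $T$ on $F(L)$ of the form $(S_g\varphi)_k=a_k(g)\varphi_{g^{-1}k}$, $(T_g\psi)_l=b_l(g)\psi_{g^{-1}l}$, where $|a_k(g)|=|b_l(g)|=1$, such that $S_g\mathcal U=\mathcal U T_g$ for all $g\in G$. The representation $R$ of $G$ on $F(M)$ is $(R_gf)_{kl}=f_{g^{-1}k\,g^{-1}l}$. *)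

(* Defs.v *)
From HB Require Import structures.
From mathcomp Require Import all_boot all_order all_algebra.
Set Implicit Arguments. Unset Strict Implicit. Unset Printing Implicit Defensive.
Import Order.TTheory GRing.Theory Num.Theory.
Local Open Scope ring_scope.

(* Complex scalars: an arbitrary numeric closed field C (e.g. algC, or
   complex R for R : rcfType); conjugation is z^*. *)

(* F(J) = J -> C.  Operators F(J') -> F(J) are represented by their matrices
   (kernels) J -> J' -> C, w.r.t. the standard bases; the standard
   Hermitian product makes the adjoint the conjugate transpose. *)
Definition op (C : Type) (J J' : finType) := J -> J' -> C.

Definition opmul (C : numClosedFieldType) (J J' J'' : finType)
  (A : op C J J') (B : op C J' J'') : op C J J'' :=
  fun j j'' => \sum_(j' : J') A j j' * B j' j''.

Definition opadj (C : numClosedFieldType) (J J' : finType) (A : op C J J') :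
  op C J' J := fun j' j => (A j j')^*.

Definition opid (C : numClosedFieldType) (J : finType) : op C J J :=
  fun j j' => (j == j')%:R.

Definition unitary (C : numClosedFieldType) (K L : finType) (u : op C K L) :=
  opmul u (opadj u) = @opid C K /\ opmul (opadj u) u = @opid C L.

Definition Cu (C : numClosedFieldType) (K L : finType) (u : op C K L)
  (f : K * L -> C) : op C K K :=
  fun k k' => \sum_(l : L) u k l * f (k, l) * (u k' l)^*.

Definition Du (C : numClosedFieldType) (K L : finType) (u : op C K L)
  (f : K * L -> C) : op C K K :=
  fun k k' => \sum_(l : L) u k l * f (k', l) * (u k' l)^*.

Definition left_action (G : groupType) (X : Type) (act : G -> X -> X) :=
  (forall x, act 1%g x = x) /\
  (forall g h x, act (g * h)%g x = act g (act h x)).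

(* monomial operator (P_g phi)_x = c_x(g) phi_{g^-1 x}; its matrix *)
Definition monop (C : numClosedFieldType) (G : groupType) (X : finType)
  (act : G -> X -> X) (c : X -> G -> C) (g : G) : op C X X :=
  fun x x' => c x g * (x' == act (g^-1)%g x)%:R.

Definition faithful_unitary_rep (C : numClosedFieldType) (G : groupType)
  (X : finType) (P : G -> op C X X) :=
  P 1%g = @opid C X /\
  (forall g h, P (g * h)%g = opmul (P g) (P h)) /\
  (forall g, opmul (P g) (opadj (P g)) = @opid C X /\
             opmul (opadj (P g)) (P g) = @opid C X) /\
  injective P.

Definition symmetry_group (C : numClosedFieldType) (K L : finType)
  (u : op C K L) (G : groupType) (actK : G -> K -> K) (actL : G -> L -> L)
  (a : K -> G -> C) (b : L -> G -> C) :=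
  [/\ left_action actK, left_action actL,
      (forall k g, `|a k g| = 1) /\ (forall l g, `|b l g| = 1),
      faithful_unitary_rep (monop actK a) /\
      faithful_unitary_rep (monop actL b) &
      forall g, opmul (monop actK a g) u = opmul u (monop actL b g)].

Definition Rrep (C : Type) (G : groupType) (K L : finType)
  (actK : G -> K -> K) (actL : G -> L -> L) (g : G) (f : K * L -> C) :
  K * L -> C :=
  fun kl => f (actK (g^-1)%g kl.1, actL (g^-1)%g kl.2).

(* Main.v *)
Require Import Defs.
From Stdlib Require Import FunctionalExtensionality.
From HB Require Import structures.
From mathcomp Require Import all_boot all_order all_algebra.
From mathcomp Require Import ring.
Import Order.TTheory GRing.Theory Num.Theory.
Local Open Scope ring_scope.

Lemma sum_delta (C : numClosedFieldType) (J : finType) (x : J) (F : J -> C) :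
  \sum_(j : J) (j == x)%:R * F j = F x.
Proof.
rewrite (bigD1 x) //= eqxx mul1r big1 ?addr0 // => j /negbTE ->; by rewrite mul0r.
Qed.

Lemma sum_delta2 (C : numClosedFieldType) (J : finType) (x : J) (c : C) (F : J -> C) :
  \sum_(j : J) (c * (j == x)%:R) * F j = c * F x.
Proof.
rewrite (bigD1 x) //= eqxx mulr1 big1 ?addr0 // => j /negbTE ->; by rewrite mulr0 mul0r.
Qed.

Lemma sum_delta3 (C : numClosedFieldType) (J : finType) (x : J) (d : C) (F : J -> C) :
  \sum_(j : J) F j * (d * (j == x)%:R) = F x * d.
Proof.
rewrite (bigD1 x) //= eqxx mulr1 big1 ?addr0 // => j /negbTE ->; by rewrite !mulr0.
Qed.

Lemma monop_conj (C : numClosedFieldType) (G : groupType) (X : finType)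
  (act : G -> X -> X) (c : X -> G -> C) (g : G) (Y : op C X X) k k' :
  opmul (opmul (monop act c g) Y) (opadj (monop act c g)) k k' =
  c k g * Y (act g^-1%g k) (act g^-1%g k') * (c k' g)^*.
Proof.
rewrite /opmul /opadj /monop.
under eq_bigr => j _ do rewrite sum_delta2 rmorphM /= (rmorph_nat _).
by rewrite sum_delta3.
Qed.

Theorem proposition3p2 (C : numClosedFieldType) (n : nat) (K L : finType)
  (u : op C K L) (G : groupType) (actK : G -> K -> K) (actL : G -> L -> L)
  (a : K -> G -> C) (b : L -> G -> C) :
  #|K| = n -> #|L| = n ->
  unitary u -> (forall k l, u k l != 0) ->
  symmetry_group u actK actL a b ->
  forall (g : G) (f : K * L -> C),
    Cu u (Rrep actK actL g f) =
      opmul (opmul (monop actK a g) (Cu u f)) (opadj (monop actK a g)) /\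
    Du u (Rrep actK actL g f) =
      opmul (opmul (monop actK a g) (Du u f)) (opadj (monop actK a g)).
Proof.
move=> _ _ _ _ [_ [L1 LM] [_ Hb] _ Hint] g f.
have can1 : forall m, actL g^-1%g (actL g m) = m.
  by move=> m; rewrite -LM mulVg L1.
have can2 : forall m, actL g (actL g^-1%g m) = m.
  by move=> m; rewrite -LM mulgV L1.
have key : forall k m, a k g * u (actK g^-1%g k) m =
                       u k (actL g m) * b (actL g m) g.
  move=> k m; have := congr1 (fun F => F k m) (Hint g).
  rewrite /opmul /monop.
  rewrite sum_delta2 => ->.
  rewrite (bigD1 (actL g m)) //= can1 eqxx mulr1 big1 ?addr0 //.
  move=> j Hj; case: eqP => [E|_]; last by rewrite mulr0 mulr0.
  by move: Hj; rewrite E can2 eqxx.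
have inj : injective (actL g) by apply: (can_inj can1).
have bb : forall m, b m g * (b m g)^* = 1.
  by move=> m; rewrite -normCK Hb expr1n.
have term : forall k k' m, u k (actL g m) * (u k' (actL g m))^* =
    (a k g * u (actK g^-1%g k) m) * (a k' g * u (actK g^-1%g k') m)^*.
  move=> k k' m; rewrite !key rmorphM /=.
  rewrite -[LHS]mulr1 -(bb (actL g m)).
  by rewrite !mulrA; congr (_ * _); rewrite -!mulrA; congr (_ * _); rewrite mulrC.
split; apply: functional_extensionality => k; apply: functional_extensionality => k'; rewrite monop_conj /Cu /Du /Rrep /=;
  rewrite (reindex_inj inj) /= mulr_sumr mulr_suml; apply: eq_bigr => m _;
  rewrite can1 mulrAC term rmorphM /=; ring.
Qed.
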